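(* For $2\le k\le n$, $$d(n,k-1)=\sum_{a=1}^{k-1}\binom{k-1}{a}\,d(a,a)\,d(n-a,k-a).$$
   Context: A decreasing planar tree on a finite set $V\subseteq\mathbb N$ is a rooted planar tree (children of each node totally ordered) with node set $V$ such that every node is larger than all of its descendants (so the root is $\max V$). For such a tree $T$, $L(T)$ is the largest leaf of $T$. For $n\ge1$, $d(n,k)$ denotes the number of decreasing planar trees $T$ on $[1,n]$ with $L(T)\le k$ (so $d(n,k)=0$ if $k\notin[1,n]$, and $d(1,1)=1$). *)

(* Defs.v *)
From Stdlib Require Import List ClassicalEpsilon.
From mathcomp Require Import all_boot.
Set Implicit Arguments. Unset Strict Implicit. Unset Printing Implicit Defensive.

Inductive ptree : Type := PNode : nat -> list ptree -> ptree.

Fixpoint labels (t : ptree) : list nat :=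
  match t with
  | PNode v cs => v :: (fix go (l : list ptree) : list nat :=
                          match l with nil => nil | c :: l' => labels c ++ go l' end) cs
  end.

Fixpoint leaves (t : ptree) : list nat :=
  match t with
  | PNode v nil => v :: nil
  | PNode v cs => (fix go (l : list ptree) : list nat :=
                     match l with nil => nil | c :: l' => leaves c ++ go l' end) cs
  end.

Fixpoint decreasing (t : ptree) : Prop :=
  match t with
  | PNode v cs => (fix go (l : list ptree) : Prop :=
                     match l with
                     | nil => True
                     | c :: l' => (forall x, List.In x (labels c) -> x < v)
                                  /\ decreasing c /\ go l'
                     end) cs
  end.

Definition largest_leaf (t : ptree) : nat := foldr maxn 0 (leaves t).

Definition dpt_on (n : nat) (t : ptree) : Prop :=
  List.NoDup (labels t) /\ (forall x, List.In x (labels t) <-> (1 <= x <= n)) /\ decreasing t.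

Definition counts (P : ptree -> Prop) (m : nat) : Prop :=
  exists l : list ptree, List.NoDup l /\ (forall t, List.In t l <-> P t) /\ length l = m.

(* d(n,k): number of decreasing planar trees T on [1,n] with L(T) <= k;
   by convention 0 when k is not in [1,n]. *)
Definition d (n k : nat) : nat :=
  if (1 <= k <= n) then
    epsilon (inhabits 0) (counts (fun t => dpt_on n t /\ largest_leaf t <= k))
  else 0.

(* Main.v *)
Require Import Defs.
From HB Require Import structures.
From Stdlib Require Import List ClassicalEpsilon.
From mathcomp Require Import all_boot zify.
From Stdlib Require Import Lia.
Set Implicit Arguments. Unset Strict Implicit. Unset Printing Implicit Defensive.

Fixpoint enc (t : ptree) : GenTree.tree nat :=
  match t with PNode v cs => GenTree.Node v (seq.map enc cs) end.
Fixpoint dec (g : GenTree.tree nat) : ptree :=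
  match g with
  | GenTree.Node v gs => PNode v (seq.map dec gs)
  | GenTree.Leaf v => PNode v [::]
  end.

Section Ind.
Variable P : ptree -> Prop.
Hypothesis H : forall v cs, (forall c, List.In c cs -> P c) -> P (PNode v cs).
Fixpoint ptree_ind2 (t : ptree) : P t :=
  match t with
  | PNode v cs => H v ((fix go (l : seq ptree) : forall c, List.In c l -> P c :=
       match l with
       | [::] => fun c (hc : List.In c [::]) => False_ind _ hc
       | c0 :: l' => fun c hc =>
           match hc with
           | or_introl e => eq_ind c0 P (ptree_ind2 c0) c e
           | or_intror h => go l' c h
           end
       end) cs)
  end.
End Ind.

Lemma encK : cancel enc dec.
Proof.
elim/ptree_ind2 => v cs IH /=; congr PNode.
elim: cs IH => //= c cs IHc H; rewrite H /=; [|by left].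
by rewrite IHc // => c' hc'; apply: H; right.
Qed.

HB.instance Definition _ := Countable.copy ptree (can_type encK).

Lemma InE (T : eqType) (x : T) s : List.In x s <-> x \in s.
Proof.
elim: s => //= y s IH; rewrite in_cons; split.
  by case=> [->|/IH ->]; rewrite ?eqxx ?orbT.
by case/orP=> [/eqP ->|/IH]; [left|right].
Qed.

Lemma NoDupE (T : eqType) (s : seq T) : List.NoDup s <-> uniq s.
Proof.
elim: s => [|x s IH] /=; first by split=> // _; constructor.
split.
  by move=> h; inversion h; subst; apply/andP; split; [apply/negP => /InE|apply/IH].
by case/andP=> hx hs; constructor; [move/InE; apply/negP|apply/IH].
Qed.

Lemma lengthE (T : Type) (s : seq T) : length s = size s.
Proof. by elim: s => //= x s ->. Qed.

Lemma countsE P m : counts P m <-> exists s : seq ptree, [/\ uniq s, (forall t, t \in s <-> P t) & size s = m].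
Proof.
split.
  case=> s [h1 [h2 h3]]; exists s; split; first by apply/NoDupE.
    by move=> t; rewrite -InE.
  by rewrite -lengthE.
case=> s [h1 h2 h3]; exists s; split; first by apply/NoDupE.
by split; [move=> t; rewrite InE|rewrite lengthE].
Qed.

Lemma counts_uniq P m m' : counts P m -> counts P m' -> m = m'.
Proof.
move=> /countsE [s [us hs <-]] /countsE [s' [us' hs' <-]].
apply: perm_size; apply: uniq_perm => // t.
by apply/idP/idP => [/hs/hs'|/hs'/hs].
Qed.

Lemma labelsE v cs : labels (PNode v cs) = v :: flatten (seq.map labels cs).
Proof. by congr cons; elim: cs => //= c cs ->. Qed.

Lemma leavesE v cs : leaves (PNode v cs) = if cs is [::] then [:: v] else flatten (seq.map leaves cs).
Proof. case: cs => //= c cs; congr cat; by elim: cs => //= c' cs ->. Qed.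

Lemma decreasingE v cs : decreasing (PNode v cs) <->
  (forall c, c \in cs -> (forall x, x \in labels c -> x < v) /\ decreasing c).
Proof.
rewrite /=; elim: cs => [|c cs IH]; first by split.
split.
  case=> h1 [h2 /IH h3] c'; rewrite in_cons => /orP [/eqP ->|/h3 //].
  by split=> // x /InE; apply h1.
move=> h; split.
  by move=> x /InE; apply: (proj1 (h c (mem_head _ _))).
split; first by apply: (proj2 (h c (mem_head _ _))).
by apply/IH => c' hc'; apply: h; rewrite in_cons hc' orbT.
Qed.
Definition tree_on (X : seq nat) t :=
  [/\ uniq (labels t), (forall x, (x \in labels t) = (x \in X)) & decreasing t].

Lemma largest_leafE t k : (largest_leaf t <= k) = all (fun x => x <= k) (leaves t).
Proof. rewrite /largest_leaf; elim: (leaves t) => //= x s <-; by rewrite geq_max. Qed.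

Lemma dpt_onE n t : dpt_on n t <-> tree_on (iota 1 n) t.
Proof.
rewrite /dpt_on /tree_on; split.
  case=> h1 [h2 h3]; split => //; first by apply/NoDupE.
  move=> x; rewrite mem_iota add1n ltnS; apply/idP/idP; first by move/InE/h2.
  by move=> h; apply/InE/h2.
case=> h1 h2 h3; split; first by apply/NoDupE.
split=> // x; rewrite InE h2 mem_iota add1n ltnS.
by [].
Qed.

Fixpoint relabel (f : nat -> nat) (t : ptree) : ptree :=
  match t with PNode v cs => PNode (f v) (seq.map (relabel f) cs) end.

Lemma labels_relabel f t : labels (relabel f t) = map f (labels t).
Proof.
elim/ptree_ind2: t => v cs IH; change (labels (PNode (f v) (map (relabel f) cs)) = map f (labels (PNode v cs))).
rewrite !labelsE /= map_flatten -!map_comp; congr (_ :: flatten _).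
by apply/eq_in_map => c /InE /IH.
Qed.

Lemma leaves_relabel f t : leaves (relabel f t) = map f (leaves t).
Proof.
elim/ptree_ind2: t => v cs IH; change (leaves (PNode (f v) (map (relabel f) cs)) = map f (leaves (PNode v cs))).
rewrite !leavesE; case: cs IH => //= c cs IH.
rewrite map_cat map_flatten -!map_comp; congr (_ ++ flatten _); first by apply: IH; left.
by apply/eq_in_map => c' /InE hc; apply: IH; right.
Qed.

Lemma relabel_eq_in f g t : {in labels t, f =1 g} -> relabel f t = relabel g t.
Proof.
elim/ptree_ind2: t => v cs IH; rewrite labelsE => h /=.
rewrite h ?mem_head //; congr PNode; apply/eq_in_map => c /InE hc; apply: IH => // x hx.
apply: h; rewrite in_cons; apply/orP; right; apply/flattenP; exists (labels c) => //.
by apply: map_f; apply/InE.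
Qed.

Lemma relabel_comp f g t : relabel g (relabel f t) = relabel (g \o f) t.
Proof.
elim/ptree_ind2: t => v cs IH /=; congr PNode; rewrite -map_comp.
by apply/eq_in_map => c /InE /IH.
Qed.

Lemma relabel_id t : relabel id t = t.
Proof.
elim/ptree_ind2: t => v cs IH /=; congr PNode; rewrite -[RHS]map_id.
by apply/eq_in_map => c /InE /IH.
Qed.

Lemma mem_labels_child v cs c x : c \in cs -> x \in labels c -> x \in labels (PNode v cs).
Proof.
move=> hc hx; rewrite labelsE in_cons; apply/orP; right; apply/flattenP.
by exists (labels c) => //; apply: map_f.
Qed.

Lemma decreasing_relabel f t : decreasing t ->
  {in labels t &, forall x y, x < y -> f x < f y} -> decreasing (relabel f t).
Proof.
elim/ptree_ind2: t => v cs IH /decreasingE hd hf /=; apply/decreasingE => c' /mapP [c hc ->].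
have [h1 h2] := hd c hc; split.
  rewrite labels_relabel => x /mapP [y hy ->]; apply: hf => //.
    by apply: (mem_labels_child _ hc).
  by rewrite labelsE mem_head.
  by apply: h1.
apply: IH => //; first by apply/InE.
by move=> x y hx hy; apply: hf; apply: (mem_labels_child _ hc).
Qed.

Lemma counts_bij (P Q : ptree -> Prop) f g m : counts P m ->
  (forall t, P t -> Q (f t)) -> (forall t, Q t -> P (g t) /\ f (g t) = t) ->
  (forall t, P t -> g (f t) = t) -> counts Q m.
Proof.
move=> /countsE [s [us hs <-]] hPQ hQP hgf; apply/countsE; exists (map f s); split.
- rewrite map_inj_in_uniq // => x y /hs hx /hs hy e.
  by rewrite -(hgf _ hx) -(hgf _ hy) e.
- move=> t; split; first by case/mapP => x /hs hx ->; apply: hPQ.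
  by move=> /hQP [/hs h <-]; apply: map_f.
- by rewrite size_map.
Qed.

Lemma idx_mono (X : seq nat) x y : sorted ltn X -> x \in X -> y \in X ->
  (x < y) = (index x X < index y X).
Proof.
move=> so hx hy.
have hn : forall i j, i < size X -> j < size X -> i < j -> nth 0 X i < nth 0 X j.
  by move=> i j hi hj; apply: (sorted_ltn_nth ltn_trans 0 so).
have ix : index x X < size X by rewrite index_mem.
have iy : index y X < size X by rewrite index_mem.
case: (ltngtP (index x X) (index y X)) => h.
- by have := hn _ _ ix iy h; rewrite !nth_index.
- by have := hn _ _ iy ix h; rewrite !nth_index // => /ltnW; rewrite leqNgt => /negbTE.
- have : nth 0 X (index x X) = nth 0 X (index y X) by rewrite h.
  by rewrite !nth_index // => ->; rewrite ltnn.
Qed.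
Lemma leaves_sub t x : x \in leaves t -> x \in labels t.
Proof.
elim/ptree_ind2: t => v cs IH; rewrite leavesE labelsE.
case: cs IH => [|c cs] IH; first by rewrite !inE.
move=> /flattenP [l /mapP [c' hc' ->] hx].
rewrite in_cons; apply/orP; right; apply/flattenP; exists (labels c'); first by apply: map_f.
by apply: IH => //; apply/InE.
Qed.

Section Relab.
Variables (X : seq nat) (c : nat).
Hypotheses (so : sorted ltn X) (hc : c \in X).
Let r x := (index x X).+1.
Let u y := nth 0 X y.-1.
Let uX : uniq X. Proof. by move: so; rewrite ltn_sorted_uniq_leq => /andP []. Qed.
Let F1 x : x \in X -> u (r x) = x. Proof. by move=> hx; rewrite /u /r /= nth_index. Qed.
Let I y : y \in iota 1 (size X) -> y.-1 < size X.
Proof. by rewrite mem_iota add1n; case: y => //= y; rewrite ltnS. Qed.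
Let F2 y : y \in iota 1 (size X) -> r (u y) = y /\ u y \in X.
Proof.
move=> hy; have := I hy; rewrite /r /u => hi; split; last by apply: mem_nth.
rewrite index_uniq //; move: hy; rewrite mem_iota; by case: y {hi}.
Qed.
Let rX x : x \in X -> r x \in iota 1 (size X).
Proof. by move=> hx; rewrite mem_iota add1n ltnS /r ltnS index_mem. Qed.
Let rmono x y : x \in X -> y \in X -> (x <= y) = (r x <= r y).
Proof. by move=> hx hy; rewrite /r ltnS leqNgt (idx_mono so hy hx) -leqNgt. Qed.
Let rsmono x y : x \in X -> y \in X -> (x < y) = (r x < r y).
Proof. by move=> hx hy; rewrite /r ltnS (idx_mono so hx hy). Qed.
Let usmono y z : y \in iota 1 (size X) -> z \in iota 1 (size X) -> y < z -> u y < u z.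
Proof.
move=> hy hz hyz; apply: (sorted_ltn_nth ltn_trans 0 so); rewrite ?inE; try exact: I.
by move: hy hyz; rewrite mem_iota; case: y => // y _; case: z {hz} => // z.
Qed.

Definition PX t := tree_on X t /\ all (fun x => x <= c) (leaves t).
Definition PN t := dpt_on (size X) t /\ largest_leaf t <= (index c X).+1.

Lemma fwd_ok t : PX t -> PN (relabel r t).
Proof.
case=> [[hu hm hd] hl]; split.
  apply/dpt_onE; split.
  - rewrite labels_relabel map_inj_in_uniq // => x y hx hy e.
    by rewrite -(F1 (x := x)) ?e ?F1 // -hm.
  - move=> y; rewrite labels_relabel; apply/idP/idP.
      by case/mapP => x hx ->; apply: rX; rewrite -hm.
    by move=> hy; have [h1 h2] := F2 hy; rewrite -h1; apply: map_f; rewrite hm.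
  - apply: decreasing_relabel => // x y hx hy; rewrite rsmono // -hm //.
rewrite largest_leafE leaves_relabel all_map; apply/allP => x hx /=.
have hxX : x \in X by rewrite -hm; apply: leaves_sub.
by rewrite -[(index c X).+1]/(r c) -rmono //; apply: (allP hl).
Qed.

Lemma bwd_ok t : PN t -> PX (relabel u t) /\ relabel r (relabel u t) = t.
Proof.
case=> /dpt_onE [hu hm hd] hl; split; last first.
  rewrite relabel_comp -[RHS]relabel_id; apply: relabel_eq_in => y hy /=.
  by rewrite hm in hy; have [] := F2 hy.
split; first split.
- rewrite labels_relabel map_inj_in_uniq // => y z hy hz e.
  rewrite hm in hy; rewrite hm in hz; have [e1 _] := F2 hy; have [e2 _] := F2 hz; by rewrite -e1 e e2.
- move=> x; rewrite labels_relabel; apply/idP/idP.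
    by case/mapP => y hy ->; rewrite hm in hy; have [] := F2 hy.
  by move=> hx; rewrite -(F1 hx); apply: map_f; rewrite hm; apply: rX.
- apply: decreasing_relabel => // y z hy hz; apply: usmono; by rewrite -hm.
rewrite leaves_relabel all_map; apply/allP => y hy /=.
have hyN : y \in iota 1 (size X) by rewrite -hm; apply: leaves_sub.
move: hl; rewrite largest_leafE => /allP /(_ y hy) hyc.
have [e1 e2] := F2 hyN; rewrite (rmono e2 hc) e1 //.
Qed.

Lemma relab_PX_PN m : counts PX m -> counts PN m.
Proof.
move=> h; apply: (counts_bij h (f := relabel r) (g := relabel u)).
- exact: fwd_ok.
- by move=> t /bwd_ok [].
- move=> t [[_ hm _] _]; rewrite relabel_comp -[RHS]relabel_id; apply: relabel_eq_in => x hx /=.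
  by apply: F1; rewrite -hm.
Qed.

Lemma relab_PN_PX m : counts PN m -> counts PX m.
Proof.
move=> h; apply: (counts_bij h (f := relabel u) (g := relabel r)).
- by move=> t /bwd_ok [].
- move=> t ht; split; first exact: fwd_ok.
  case: ht => [[_ hm _] _]; rewrite relabel_comp -[RHS]relabel_id; apply: relabel_eq_in => x hx /=.
  by apply: F1; rewrite -hm.
- by move=> t /bwd_ok [].
Qed.
End Relab.
Fixpoint attach (k : nat) (S : ptree) (t : ptree) {struct t} : ptree :=
  match t with PNode v cs =>
    PNode v (if v == k then S :: seq.map (attach k S) cs else seq.map (attach k S) cs) end.

Fixpoint remk (k : nat) (t : ptree) {struct t} : ptree :=
  match t with PNode v cs =>
    PNode v (if v == k then (match cs with [::] => [::] | _ :: cs' => seq.map (remk k) cs' end) else seq.map (remk k) cs) end.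

Lemma rem_attach k S t : remk k (attach k S t) = t.
Proof.
elim/ptree_ind2: t => v cs IH /=; case: eqP => _ /=; congr PNode; rewrite -map_comp -[RHS]map_id;
 by apply/eq_in_map => c /InE /IH.
Qed.

Lemma mem_child v cs x : (x \in labels (PNode v cs)) = (x == v) || has (fun c => x \in labels c) cs.
Proof.
rewrite labelsE in_cons; congr orb; apply/flattenP/hasP.
  by case=> l /mapP [c hc ->] hx; exists c.
by case=> c hc hx; exists (labels c) => //; apply: map_f.
Qed.

Lemma attach_id k S t : k \notin labels t -> attach k S t = t.
Proof.
elim/ptree_ind2: t => v cs IH; rewrite mem_child negb_or => /andP [hv hcs] /=.
rewrite eq_sym (negbTE hv); congr PNode; rewrite -[RHS]map_id; apply/eq_in_map => c hc.
apply: IH; first by apply/InE.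
by apply: contra hcs => h; apply/hasP; exists c.
Qed.

Lemma attach_inj_S k S S' t : k \in labels t -> attach k S t = attach k S' t -> S = S'.
Proof.
elim/ptree_ind2: t => v cs IH; rewrite mem_child /= => hk.
case: eqP => hv; first by case.
move: hk; rewrite (introF eqP (fun e => hv (esym e))) /= => /hasP [c hc hkc] [] e.
apply: (IH c); [by apply/InE| done|].
have := congr1 (fun l => nth (PNode 0 [::]) l (index c cs)) e.
by rewrite !(nth_map (PNode 0 [::])) ?index_mem // nth_index.
Qed.

Lemma mem_attach k S t x : (x \in labels (attach k S t)) =
  (x \in labels t) || ((k \in labels t) && (x \in labels S)).
Proof.
elim/ptree_ind2: t => v cs IH; change (attach k S (PNode v cs)) with
  (PNode v (if v == k then S :: seq.map (attach k S) cs else seq.map (attach k S) cs)).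
rewrite !mem_child.
have hh : has (fun c => x \in labels c) (map (attach k S) cs) =
   has (fun c => x \in labels c) cs || (has (fun c => k \in labels c) cs && (x \in labels S)).
  rewrite has_map; apply/hasP/idP.
    case=> c hc /=; rewrite IH; last by apply/InE.
    case/orP=> [h|/andP [h1 h2]]; first by apply/orP; left; apply/hasP; exists c.
    by apply/orP; right; rewrite h2 andbT; apply/hasP; exists c.
  case/orP=> [/hasP [c hc h]|/andP [/hasP [c hc h] h2]]; exists c => //=; rewrite IH ?h //;
   try (by apply/InE); by rewrite h2 orbT.
case: (eqVneq v k) => [->|hv] /=; rewrite ?hh ?eqxx /=.
  by case: (x == k); case: (x \in labels S); rewrite /= ?orbT ?andbT ?andbF ?orbF.
by rewrite orbA.
Qed.

Lemma sumn_map_addmul (cs : seq ptree) (f g : ptree -> nat) s :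
  sumn [seq f c + g c * s | c <- cs] = sumn (map f cs) + sumn (map g cs) * s.
Proof. elim: cs => //= c cs ->; rewrite mulnDl; lia. Qed.

Lemma size_attach k S t : size (labels (attach k S t)) =
  size (labels t) + count_mem k (labels t) * size (labels S).
Proof.
elim/ptree_ind2: t => v cs IH; change (attach k S (PNode v cs)) with
  (PNode v (if v == k then S :: seq.map (attach k S) cs else seq.map (attach k S) cs)).
rewrite !labelsE /= !size_flatten count_flatten /shape -!map_comp.
have -> : sumn [seq (size \o labels) i | i <- if v == k then S :: [seq attach k S i | i <- cs]
             else [seq attach k S i | i <- cs]] =
   (v == k) * size (labels S) + sumn [seq size (labels c) + count_mem k (labels c) * size (labels S) | c <- cs].
  have e : sumn [seq (size \o labels) i | i <- [seq attach k S i | i <- cs]] =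
     sumn [seq size (labels c) + count_mem k (labels c) * size (labels S) | c <- cs].
    rewrite -map_comp; congr sumn; apply/eq_in_map => c /InE hc /=; exact: IH.
  by case: (v == k); rewrite /= ?e ?mul1n ?mul0n ?add0n.
rewrite sumn_map_addmul eq_sym.
have -> : [seq size (labels c) | c <- cs] = [seq (size \o labels) i | i <- cs] by [].
have -> : [seq count_mem k (labels c) | c <- cs] = [seq ([eta count_mem k] \o labels) i | i <- cs] by [].
case: (k == v) => /=; lia.
Qed.

Lemma decreasing_attach k S t : decreasing S -> (forall x, x \in labels S -> x < k) ->
  decreasing t -> decreasing (attach k S t).
Proof.
move=> dS hS; elim/ptree_ind2: t => v cs IH /decreasingE hd.
change (attach k S (PNode v cs)) with
  (PNode v (if v == k then S :: seq.map (attach k S) cs else seq.map (attach k S) cs)).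
have hch : forall c', c' \in map (attach k S) cs ->
    (forall x, x \in labels c' -> x < v) /\ decreasing c'.
  move=> c' /mapP [c hc ->]; have [h1 h2] := hd c hc; split; last by apply: IH => //; apply/InE.
  move=> x; rewrite mem_attach => /orP [/h1 //|/andP [/h1 hk /hS hx]]; exact: ltn_trans hx hk.
apply/decreasingE => c'; case: eqP => [e |_]; last exact: hch.
subst v; rewrite in_cons => /orP [/eqP ->|/hch //]; by split.
Qed.

Lemma decreasing_attach_inv k S t : decreasing (attach k S t) -> decreasing t.
Proof.
elim/ptree_ind2: t => v cs IH.
change (attach k S (PNode v cs)) with
  (PNode v (if v == k then S :: seq.map (attach k S) cs else seq.map (attach k S) cs)).
move/decreasingE => hd; apply/decreasingE => c hc.
have hc' : attach k S c \in (if v == k then S :: [seq attach k S i | i <- cs] else [seq attach k S i | i <- cs]).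
  by case: (v == k); rewrite ?in_cons map_f ?orbT.
have [h1 h2] := hd _ hc'; split; last by apply: (IH c) => //; apply/InE.
by move=> x hx; apply: h1; rewrite mem_attach hx.
Qed.

Lemma decreasing_attach_S k S t : decreasing (attach k S t) -> k \in labels t ->
  decreasing S /\ (forall x, x \in labels S -> x < k).
Proof.
elim/ptree_ind2: t => v cs IH.
change (attach k S (PNode v cs)) with
  (PNode v (if v == k then S :: seq.map (attach k S) cs else seq.map (attach k S) cs)).
move/decreasingE => hd; rewrite mem_child; case: (eqVneq v k) => [e|hv] /=.
  subst v; move=> _.
  have hm : S \in (if k == k then S :: seq.map (attach k S) cs else seq.map (attach k S) cs).
    by rewrite eqxx mem_head.
  by have [] := hd _ hm; split.
move=> /hasP [c hc hk].
have hm : attach k S c \in (if v == k then S :: seq.map (attach k S) cs else seq.map (attach k S) cs).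
  by rewrite (negbTE hv) map_f.
have [_ h2] := hd _ hm.
have hc' : In c cs by apply/InE.
exact: (IH c hc' h2 hk).
Qed.
Lemma InI (T : eqType) (x : T) s : x \in s -> List.In x s.
Proof. by move/InE. Qed.

Lemma attachE k S v cs : attach k S (PNode v cs) =
  PNode v (if v == k then S :: seq.map (attach k S) cs else seq.map (attach k S) cs).
Proof. by []. Qed.

Lemma leaves_child v cs c x : c \in cs -> x \in leaves c -> x \in leaves (PNode v cs).
Proof.
move=> hc hx; rewrite leavesE; case: cs hc => // c0 cs hc.
by apply/flattenP; exists (leaves c) => //; apply: map_f.
Qed.

Lemma leaves_childP v c0 cs x : x \in leaves (PNode v (c0 :: cs)) ->
  exists2 c, c \in c0 :: cs & x \in leaves c.
Proof.
rewrite leavesE => /flattenP [l /mapP [c hc ->] hx]; by exists c.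
Qed.

Lemma leaves_childQ v cs x : x \in leaves (PNode v cs) ->
  (cs = [::] /\ x = v) \/ exists2 c, c \in cs & x \in leaves c.
Proof.
case: cs => [|c0 cs]; first by rewrite leavesE inE => /eqP ->; left.
by move/leaves_childP; right.
Qed.

Lemma leaves_attach k S t x : x \in leaves (attach k S t) ->
  x \in leaves S \/ (x \in leaves t /\ x != k).
Proof.
elim/ptree_ind2: t => v cs IH; rewrite attachE.
case: (eqVneq v k) => [e|hv] /leaves_childQ [[]|[c]] //.
  rewrite in_cons => /orP [/eqP -> ->|/mapP [c' hc' ->] hx]; first by left.
  have [h|[h1 h2]] := IH c' (InI hc') hx; first by left.
  by right; split=> //; apply: (leaves_child _ hc').
  move=> e ->; right; split=> //; case: cs IH e => // _ _.
  by rewrite leavesE mem_head.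
move=> /mapP [c' hc' ->] hx.
have [h|[h1 h2]] := IH c' (InI hc') hx; first by left.
by right; split=> //; apply: (leaves_child _ hc').
Qed.

Lemma leaves_attach2 k S t x : x \in leaves t -> x != k -> x \in leaves (attach k S t).
Proof.
elim/ptree_ind2: t => v cs IH; rewrite attachE.
move/leaves_childQ => [[-> ->] hv|[c hc hx] hk].
  case: ifP => [/eqP e|_]; first by rewrite e eqxx in hv.
  by rewrite /= inE.
have h := IH c (InI hc) hx hk.
apply: (@leaves_child v _ (attach k S c)) => //.
by case: (v == k); rewrite ?in_cons map_f ?orbT.
Qed.

Lemma uniq_labels_split v pre c post :
  uniq (labels (PNode v (pre ++ c :: post))) ->
  [/\ uniq (labels c), forall x, x \in labels c -> forall d, d \in pre -> x \notin labels d
    & forall x, x \in labels c -> forall d, d \in post -> x \notin labels d].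
Proof.
rewrite labelsE /= map_cat flatten_cat /= cat_uniq => /andP [_ /and3P [_ h1 h2]].
move: h2; rewrite cat_uniq => /and3P [uc h3 _]; split=> // x hx d hd.
  apply/negP => hxd; move/hasP: h1; apply; exists x; first by rewrite mem_cat hx.
  by apply/flattenP; exists (labels d) => //; apply: map_f.
apply/negP => hxd; move/hasP: h3; apply; exists x => //.
by apply/flattenP; exists (labels d) => //; apply: map_f.
Qed.

Lemma map_attach_id k S l : (forall d, d \in l -> k \notin labels d) -> map (attach k S) l = l.
Proof. move=> h; rewrite -[RHS]map_id; apply/eq_in_map => d hd; exact: attach_id (h d hd). Qed.

Lemma exists_attach k t : uniq (labels t) -> k \in labels t -> k \notin leaves t ->
  exists S t', t = attach k S t' /\ k \in labels t'.
Proof.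
elim/ptree_ind2: t => v cs IH hu.
rewrite mem_child; case: (eqVneq v k) => [e|hv] /=.
  subst v; move=> _; case: cs IH hu => [|S cs'] IH hu; first by rewrite /= inE eqxx.
  move=> _; exists S, (PNode k cs'); split; last by rewrite labelsE mem_head.
  rewrite attachE eqxx map_attach_id // => d hd.
  move: hu; rewrite labelsE /= => /andP [hk hu'].
  apply/negP => hkd; move: hk; rewrite mem_cat; apply/negP; rewrite negbK; apply/orP; right.
  by apply/flattenP; exists (labels d) => //; apply: map_f.
move=> /hasP [c hc hkc] hl.
case/splitPr: hc IH hu hl => pre post IH hu hl.
have [uc hpre hpost] := uniq_labels_split hu.
have hlc : k \notin leaves c.
  by apply: contra hl => h; apply: (leaves_child _ (c := c)) => //; rewrite mem_cat mem_head orbT.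
have hcin : c \in pre ++ c :: post by rewrite mem_cat mem_head orbT.
have [S [c' [ec hk']]] := IH c (InI hcin) uc hkc hlc.
exists S, (PNode v (pre ++ c' :: post)); split.
  rewrite attachE (negbTE hv) map_cat /= -ec !map_attach_id // => d hd.
    exact: hpost.
  exact: hpre.
rewrite mem_child; apply/orP; right; apply/hasP; exists c' => //.
by rewrite mem_cat mem_head orbT.
Qed.
Fixpoint subs (m : nat) : seq (seq nat) :=
  if m is m'.+1 then subs m' ++ [seq rcons A m | A <- subs m'] else [:: [::]].

Lemma subsS m : subs m.+1 = subs m ++ [seq rcons A m.+1 | A <- subs m].
Proof. by []. Qed.

Lemma subs_filter m A : A \in subs m -> A = [seq x <- iota 1 m | x \in A].
Proof.
elim: m A => [|m IH] A; first by rewrite /= inE => /eqP ->.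
have -> : iota 1 m.+1 = iota 1 m ++ [:: m.+1] by rewrite -[m.+1]addn1 iotaD add1n addn1.
rewrite subsS filter_cat /= mem_cat => /orP [hA|/mapP [B hB ->]].
  have e := IH _ hA.
  have hm : m.+1 \notin A by rewrite e mem_filter mem_iota add1n ltnn !andbF.
  by rewrite (negbTE hm) cats0.
rewrite mem_rcons mem_head -cats1; congr cat.
rewrite {1}(IH _ hB); apply: eq_in_filter => x; rewrite mem_iota mem_cat inE add1n ltnS => /andP [_ hx].
have : x != m.+1 by rewrite neq_ltn ltnS hx.
by move/negbTE ->; rewrite orbF.
Qed.

Lemma subs_sorted m A : A \in subs m -> sorted ltn A.
Proof. by move/subs_filter => ->; apply: sorted_filter; [exact: ltn_trans|exact: iota_ltn_sorted]. Qed.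

Lemma subs_range m A x : A \in subs m -> x \in A -> 0 < x <= m.
Proof. by move/subs_filter => -> ; rewrite mem_filter mem_iota add1n ltnS => /andP []. Qed.

Lemma subs_complete m (P : pred nat) : [seq x <- iota 1 m | P x] \in subs m.
Proof.
elim: m => [|m IH]; first by rewrite /= inE.
have -> : iota 1 m.+1 = iota 1 m ++ [:: m.+1] by rewrite -[m.+1]addn1 iotaD add1n addn1.
rewrite subsS filter_cat /= mem_cat; case: (P m.+1).
  by rewrite cats1 (map_f (rcons^~ m.+1) IH) orbT.
by rewrite cats0 IH.
Qed.

Lemma subs_uniq m : uniq (subs m).
Proof.
elim: m => // m IH; rewrite subsS cat_uniq IH map_inj_uniq ?IH; last exact: rcons_injl.
rewrite andbT /=; apply/hasP => [[B /mapP [A hA ->] hB]].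
have := subs_range hB (x := m.+1); rewrite mem_rcons mem_head => /(_ isT).
by rewrite ltnn andbF.
Qed.

Lemma sumn_mapD (T : Type) (s : seq T) f g :
  sumn [seq f x + g x | x <- s] = sumn (map f s) + sumn (map g s).
Proof. elim: s => //= x s ->; lia. Qed.

Lemma sumn_subs m (F : nat -> nat) :
  sumn [seq F (size A) | A <- subs m] = \sum_(0 <= a < m.+1) 'C(m, a) * F a.
Proof.
elim: m F => [|m IH] F; first by rewrite big_nat1 /= bin0 mul1n addn0.
rewrite subsS map_cat sumn_cat.
have -> : sumn [seq F (size A) | A <- [seq rcons A m.+1 | A <- subs m]] = sumn [seq F (size A).+1 | A <- subs m].
  by rewrite -map_comp; congr sumn; apply/eq_in_map => A _ /=; rewrite size_rcons.
rewrite (IH (fun a => F a.+1)) IH.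
rewrite [RHS](big_nat_recl (m.+1)) // bin0 mul1n.
rewrite [X in _ = _ + X](eq_bigr (fun i => 'C(m, i.+1) * F i.+1 + 'C(m, i) * F i.+1)); last first.
  by move=> i _; rewrite binS mulnDl.
rewrite big_split /=.
rewrite [X in X + _ = _](big_nat_recl m) // bin0 mul1n.
rewrite [X in _ = _ + (X + _)]big_nat_recr //= bin_small // mul0n addn0.
lia.
Qed.

Lemma sumn_filter0 (T : Type) (s : seq T) (p : pred T) f :
  (forall x, ~~ p x -> f x = 0) -> sumn [seq f x | x <- s & p x] = sumn (map f s).
Proof. move=> h; elim: s => //= x s IH; case: ifP => hx /=; rewrite IH // h ?hx //. Qed.
Definition Is m := [seq A <- subs m | A != [::]].
Definition XA n (A : seq nat) := [seq x <- iota 1 n | x \notin A].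

Lemma attach_inj k S S' T T' : k \in labels T -> attach k S T = attach k S' T' -> S = S' /\ T = T'.
Proof.
move=> hk e; have eT : T = T' by rewrite -(rem_attach k S T) e rem_attach.
subst T'; split=> //; exact: attach_inj_S hk e.
Qed.

Lemma uniq_flatten_map (T R : eqType) (s : seq T) (B : T -> seq R) :
  uniq s -> (forall x, x \in s -> uniq (B x)) ->
  (forall x y z, x \in s -> y \in s -> z \in B x -> z \in B y -> x = y) ->
  uniq (flatten (map B s)).
Proof.
elim: s => //= x s IH /andP [hx us] hB hxy; rewrite cat_uniq hB ?mem_head //=.
rewrite IH //; last by move=> a b z ha hb; apply: hxy; rewrite in_cons ?ha ?hb orbT.
  rewrite andbT; apply/hasP => [[z /flattenP [l /mapP [y hy ->] hzy] hzx]].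
  have hy' : y \in x :: s by rewrite in_cons hy orbT.
  have e := hxy x y z (mem_head _ _) hy' hzx hzy.
  by rewrite e hy in hx.
by move=> y hy; apply: hB; rewrite in_cons hy orbT.
Qed.

Lemma Is_range m A x : A \in Is m -> x \in A -> 0 < x <= m.
Proof. by rewrite mem_filter => /andP [_ h]; apply: subs_range. Qed.

Section Decomp.
Variables (n k : nat).
Hypotheses (hk : 2 <= k) (hkn : k <= n).

Lemma k_in_XA A : A \in Is k.-1 -> k \in XA n A.
Proof.
move=> hA; rewrite mem_filter mem_iota add1n ltnS hkn andbT (leq_trans _ hk) // andbT.
apply/negP => /(Is_range hA) /andP [_]; by case: k hk => // k' _; rewrite ltnn.
Qed.

Lemma fwd_dec A S T : A \in Is k.-1 -> tree_on A S -> tree_on (XA n A) T ->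
  all (fun x => x <= k) (leaves T) -> dpt_on n (attach k S T) /\ largest_leaf (attach k S T) <= k.-1.
Proof.
move=> hA [uS mS dS] [uT mT dT] lT.
have hAr := Is_range hA.
have kT : k \in labels T by rewrite mT; exact: k_in_XA.
have SA x : x \in labels S -> x < k by rewrite mS => /hAr /andP [_]; case: k hk => // k' _.
have disj : ~~ has (mem (labels T)) (labels S).
  apply/hasP => [[x hxS]]; rewrite inE mT mem_filter; rewrite mS in hxS; by rewrite hxS.
split; last first.
  rewrite largest_leafE; apply/allP => x /leaves_attach [h|[h1 h2]].
    by have := SA _ (leaves_sub h); case: k hk => // k' _.
  have := allP lT x h1; move: h2 hk => h2 hk' h3; lia.
apply/dpt_onE; split; last by apply: decreasing_attach.
- apply: (@leq_size_uniq _ (labels T ++ labels S)).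
  + by rewrite cat_uniq uT uS /= andbT; apply: contra disj => /hasP [x h1 h2]; apply/hasP; exists x.
  + by move=> x; rewrite mem_cat mem_attach kT /=.
  + by rewrite size_attach count_uniq_mem // kT mul1n size_cat.
- move=> x; rewrite mem_attach kT /= mT mS mem_filter.
  case hx: (x \in A) => /=; last by rewrite orbF.
  rewrite mem_iota add1n ltnS; have /andP [h1 h2] := hAr _ hx; rewrite h1 /=.
  symmetry; apply: leq_trans h2 _; apply: leq_trans hkn; apply: leq_pred.
Qed.

Lemma bwd_dec t : dpt_on n t -> largest_leaf t <= k.-1 ->
  exists A S T, [/\ A \in Is k.-1, tree_on A S, tree_on (XA n A) T,
    all (fun x => x <= k) (leaves T) & t = attach k S T].
Proof.
move=> /dpt_onE [ut mt dt] hl.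
have kt : k \in labels t by rewrite mt mem_iota add1n ltnS hkn (leq_trans _ hk).
have nkl : k \notin leaves t.
  apply/negP => h; move: hl; rewrite largest_leafE => /allP /(_ k h).
  by case: k hk => // k' _; rewrite ltnn.
have [S [T [et kT]]] := exists_attach ut kt nkl; subst t.
have [dS ltS] := decreasing_attach_S dt kT.
have dT := decreasing_attach_inv dt.
have uTS : uniq (labels T ++ labels S).
  apply: (leq_size_uniq ut).
    by move=> x; rewrite mem_attach mem_cat kT /=.
  rewrite size_cat size_attach leq_add2l.
  have c1 : 0 < count_mem k (labels T).
    by rewrite -has_count; apply/hasP; exists k; rewrite //= eqxx.
  by rewrite -{1}[size (labels S)]mul1n leq_mul2r c1 orbT.
move: uTS; rewrite cat_uniq => /and3P [uT disj uS].
have Sr x : x \in labels S -> 0 < x <= k.-1.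
  move=> hx; have : x \in labels (attach k S T) by rewrite mem_attach kT hx orbT.
  rewrite mt mem_iota add1n => /andP [-> _] /=; have := ltS _ hx.
  by case: k hk => // k' _.
set A := [seq x <- iota 1 k.-1 | x \in labels S].
have mA x : (x \in A) = (x \in labels S).
  rewrite mem_filter mem_iota add1n ltnS; case hx: (x \in labels S) => //=.
  by have /andP [-> ->] := Sr _ hx.
exists A, S, T; split=> //.
- rewrite mem_filter subs_complete andbT; apply/negP => /eqP eA.
  have [v hv] : exists v, v \in labels S by case: (S) => v cs; exists v; rewrite labelsE mem_head.
  by have := hv; rewrite -mA eA.
- by split=> // x; rewrite mA.
- split=> // x; rewrite mem_filter mA.
  apply/idP/idP.
    move=> hx; have : x \in labels (attach k S T) by rewrite mem_attach hx.
    rewrite mt => ->; rewrite andbT; apply/negP => hxS; move/hasP: disj; apply; by exists x.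
  case/andP => hS; rewrite -mt mem_attach kT /= => /orP [//|h]; by rewrite h in hS.
- apply/allP => x hx; case: (eqVneq x k) => [-> //|hxk].
  have := leaves_attach2 S hx hxk; move: hl; rewrite largest_leafE => /allP h /h.
  by move/leq_trans; apply; apply: leq_pred.
Qed.
End Decomp.
Lemma Is_uniq m : uniq (Is m).
Proof. by apply: filter_uniq; apply: subs_uniq. Qed.

Lemma Is_eq m A A' : A \in Is m -> A' \in Is m -> A =i A' -> A = A'.
Proof.
rewrite !mem_filter => /andP [_ /subs_filter e1] /andP [_ /subs_filter e2] h.
by rewrite e1 e2; apply: eq_filter => x; rewrite /= h.
Qed.

Lemma decomp n k (lS lT : seq nat -> seq ptree) : 2 <= k -> k <= n ->
  (forall A, A \in Is k.-1 -> uniq (lS A) /\ forall t, t \in lS A <-> tree_on A t) ->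
  (forall A, A \in Is k.-1 -> uniq (lT A) /\
      forall t, t \in lT A <-> tree_on (XA n A) t /\ all (fun x => x <= k) (leaves t)) ->
  counts (fun t => dpt_on n t /\ largest_leaf t <= k.-1)
    (sumn [seq size (lS A) * size (lT A) | A <- Is k.-1]).
Proof.
move=> hk hkn hS hT; apply/countsE.
exists (flatten [seq [seq attach k Sx Tx | Sx <- lS A, Tx <- lT A] | A <- Is k.-1]); split.
- apply: uniq_flatten_map; first exact: Is_uniq.
    move=> A hA; have [uS mS] := hS A hA; have [uT mT] := hT A hA.
    apply: allpairs_uniq => // -[Sx Tx] [Sy Ty] /allpairsP [[a b] [ha hb [-> ->]]]
      /allpairsP [[a' b'] [ha' hb' [-> ->]]] /= e.
    have [kT _] := (proj1 (mT b) hb).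
    have kb : k \in labels b by case: kT => _ -> _; exact: k_in_XA.
    by have [-> ->] := attach_inj kb e.
  move=> A A' z hA hA' /allpairsP [[Sx Tx] [hS1 hT1 ->]] /allpairsP [[Sy Ty] [hS1' hT1' /=]] e.
  have [_ mT] := hT A hA; have [[_ mX _] _] := proj1 (mT Tx) hT1.
  have kT : k \in labels Tx by rewrite mX; exact: k_in_XA.
  have [eS _] := attach_inj kT e.
  have [_ mS] := hS A hA; have [_ mS'] := hS A' hA'.
  have [_ m1 _] := proj1 (mS Sx) hS1; have [_ m2 _] := proj1 (mS' Sy) hS1'.
  apply: (Is_eq hA hA') => x; by rewrite /= -m1 -m2 eS.
- move=> t; split.
    move=> /flattenP [l /mapP [A hA ->] /allpairsP [[Sx Tx] [hS1 hT1 ->]]] /=.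
    have [_ mS] := hS A hA; have [_ mT] := hT A hA.
    have [h1 h2] := proj1 (mT Tx) hT1.
    exact: fwd_dec hA (proj1 (mS Sx) hS1) h1 h2.
  case=> h1 h2; have [A [Sx [Tx [hA h3 h4 h5 ->]]]] := bwd_dec hk hkn h1 h2.
  apply/flattenP; exists [seq attach k S0 T0 | S0 <- lS A, T0 <- lT A]; first exact: map_f.
  have [_ mS] := hS A hA; have [_ mT] := hT A hA.
  by apply: allpairs_f; [apply/mS|apply/mT].
- rewrite size_flatten /shape -map_comp; congr sumn; apply/eq_in_map => A _ /=.
  by rewrite size_allpairs.
Qed.
Definition Q n j := fun t => dpt_on n t /\ largest_leaf t <= j.

Lemma dE n j m : 0 < j <= n -> counts (Q n j) m -> d n j = m.
Proof.
move=> hj hc; rewrite /d hj; apply: (counts_uniq _ hc).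
by apply: (epsilon_spec (inhabits 0) (counts (Q n j))); exists m.
Qed.

Lemma counts_ext (P P' : ptree -> Prop) m : (forall t, P t <-> P' t) -> counts P m -> counts P' m.
Proof.
move=> h hc; apply: (counts_bij hc (f := id) (g := id)) => // t; first by move/h.
by move/h.
Qed.

Lemma count_sub (A s : seq nat) : uniq A -> {subset A <= s} -> uniq s -> count (mem A) s = size A.
Proof.
move=> uA sub us; rewrite -size_filter; apply: perm_size; apply: uniq_perm => //.
  exact: filter_uniq.
by move=> x; rewrite mem_filter; apply/andP/idP => [[]|h] //; split => //; apply: sub.
Qed.

Lemma size_XA n A : uniq A -> {subset A <= iota 1 n} -> size (XA n A) = n - size A.
Proof.
move=> uA sub; rewrite size_filter.
have := count_predC (mem A) (iota 1 n); rewrite count_sub ?iota_uniq // size_iota => e.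
by rewrite -[in RHS]e addKn.
Qed.

Lemma last_max (X : seq nat) x : sorted ltn X -> x \in X -> x <= last 0 X.
Proof.
move=> so hx; case: X so hx => // y X' so hx.
have hl : last 0 (y :: X') \in y :: X' by rewrite /= mem_last.
have uX : uniq (y :: X') by move: so; rewrite ltn_sorted_uniq_leq => /andP [].
rewrite leqNgt (idx_mono so hl hx) -leqNgt -nth_last index_uniq //.
by have := index_mem x (y :: X'); rewrite hx /= ltnS.
Qed.

Section Pieces.
Variables (n k : nat).
Hypotheses (hk : 2 <= k) (hkn : k <= n).
Hypothesis hE : forall n', n' < n -> forall j, 0 < j <= n' -> exists m, counts (Q n' j) m.
Variable A : seq nat.
Hypothesis hA : A \in Is k.-1.

Let soA : sorted ltn A. Proof. by move: hA; rewrite mem_filter => /andP [_ /subs_sorted]. Qed.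
Let uA : uniq A. Proof. by move: soA; rewrite ltn_sorted_uniq_leq => /andP []. Qed.
Let nA : A != [::]. Proof. by move: hA; rewrite mem_filter => /andP []. Qed.
Let subA : {subset A <= iota 1 k.-1}.
Proof. move=> x /(Is_range hA) /andP [h1 h2]; by rewrite mem_iota add1n ltnS h1. Qed.
Let szA : size A <= k.-1.
Proof. by have := uniq_leq_size uA subA; rewrite size_iota. Qed.
Let szA0 : 0 < size A. Proof. by case: (A) nA. Qed.

Lemma piece_S : exists l, [/\ uniq l, forall t, t \in l <-> tree_on A t & size l = d (size A) (size A)].
Proof.
have hc : last 0 A \in A by case: (A) nA => // y s _; rewrite /= mem_last.
have ic : (index (last 0 A) A).+1 = size A.
  by rewrite -nth_last index_uniq // prednK // ltn_predL.
have [m hm] : exists m, counts (Q (size A) (size A)) m.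
  apply: hE; last by rewrite szA0 leqnn.
  by apply: leq_ltn_trans szA _; case: k hk hkn => // k' _; rewrite ltnS.
have hm' : counts (PN A (last 0 A)) m by rewrite /PN ic.
have := relab_PN_PX soA hc hm'.
move/(counts_ext (P' := tree_on A)) => /(_ _) /countsE [].
  move=> t; split; first by case.
  move=> ht; split=> //; apply/allP => x hx; apply: last_max => //.
  by case: ht => _ <- _; apply: leaves_sub.
move=> l [ul ml sl]; exists l; split=> //; rewrite sl; symmetry; apply: dE => //.
by rewrite szA0 leqnn.
Qed.

Lemma piece_T : exists l, [/\ uniq l, forall t, t \in l <-> tree_on (XA n A) t /\ all (fun x => x <= k) (leaves t)
   & size l = d (n - size A) (k - size A)].
Proof.
have soX : sorted ltn (XA n A) by apply: sorted_filter; [exact: ltn_trans|exact: iota_ltn_sorted].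
have hc := k_in_XA hk hkn hA.
have subn : {subset A <= iota 1 n}.
  move=> x /subA; rewrite !mem_iota => /andP [-> h] /=; apply: leq_trans h _.
  by rewrite add1n ltnS; apply: leq_trans hkn; apply: leq_pred.
have sX : size (XA n A) = n - size A by apply: size_XA.
have ic : (index k (XA n A)).+1 = k - size A.
  have e : iota 1 n = iota 1 k.-1 ++ k :: iota k.+1 (n - k).
    have h1 : n = k.-1 + (n - k).+1 by lia.
    rewrite {1}h1 iotaD; congr (_ ++ _); have -> : 1 + k.-1 = k by lia.
    by [].
  rewrite /XA e filter_cat index_cat.
  have -> : (k \in [seq x <- iota 1 k.-1 | x \notin A]) = false.
    by rewrite mem_filter mem_iota add1n; case: k hk => // k' _ /=; rewrite ltnn andbF.
  have kA : k \notin A by move: (k_in_XA hk hkn hA); rewrite mem_filter => /andP [].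
  rewrite /= kA /= eqxx addn0 size_filter.
  have := count_predC (mem A) (iota 1 k.-1); rewrite count_sub ?iota_uniq // size_iota => e2.
  rewrite -[in RHS](prednK (ltnW hk)) -[in RHS]e2 -addnS addKn.
  by [].
have [m hm] : exists m, counts (Q (n - size A) (k - size A)) m.
  apply: hE; first by lia.
  lia.
have hm' : counts (PN (XA n A) k) m by rewrite /PN ic sX.
have /countsE [l [ul ml sl]] := relab_PN_PX soX hc hm'.
exists l; split=> //; rewrite sl; symmetry; apply: dE => //; lia.
Qed.
End Pieces.
Lemma dpt1 t : dpt_on 1 t -> t = PNode 1 [::].
Proof.
case: t => v cs /dpt_onE [u m _].
have sz : size (labels (PNode v cs)) <= 1.
  by have := uniq_leq_size u (s2 := iota 1 1); rewrite size_iota; apply => x; rewrite m.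
have hv : v = 1.
  by have := m v; rewrite labelsE mem_head => /esym; rewrite mem_iota add1n ltnS => /andP [h1 h2]; apply/eqP; rewrite eqn_leq h1 h2.
case: cs u m sz => [|c cs] u m sz; first by rewrite hv.
exfalso; clear u m; move: sz; rewrite labelsE /= size_cat; case: c => w ws; rewrite labelsE.
by [].
Qed.

Lemma root_internal n t : dpt_on n t -> 2 <= n -> largest_leaf t <= n.-1.
Proof.
case: t => v cs /dpt_onE [u m dd] hn.
have vn : v <= n by have := m v; rewrite labelsE mem_head mem_iota add1n ltnS => /esym /andP [].
rewrite largest_leafE; apply/allP => x /leaves_childQ [[ecs ->]|[c hc hx]].
  subst cs; exfalso.
  have h1 : 1 \in labels (PNode v [::]) by rewrite m mem_iota; lia.
  have h2 : n \in labels (PNode v [::]) by rewrite m mem_iota; lia.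
  move: h1 h2; rewrite /= !inE => /eqP <- /eqP e; by rewrite e in hn.
move/decreasingE: dd => /(_ c hc) [h _]; have := h x (leaves_sub hx).
by move=> hxv; have := leq_trans hxv vn; case: n hn {m vn} => // n' _.
Qed.

Lemma decomp_d n k : 2 <= k -> k <= n ->
  (forall n', n' < n -> forall j, 0 < j <= n' -> exists m, counts (Q n' j) m) ->
  counts (Q n k.-1) (sumn [seq d (size A) (size A) * d (n - size A) (k - size A) | A <- Is k.-1]).
Proof.
move=> hk hkn hE.
pose pS A l := [/\ uniq l, forall t, t \in l <-> tree_on A t & size l = d (size A) (size A)].
pose pT A l := [/\ uniq l, forall t, t \in l <-> tree_on (XA n A) t /\ all (fun x => x <= k) (leaves t)
   & size l = d (n - size A) (k - size A)].
pose lS A := epsilon (inhabits [::]) (pS A).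
pose lT A := epsilon (inhabits [::]) (pT A).
have hS A : A \in Is k.-1 -> pS A (lS A).
  by move=> hA; apply: epsilon_spec; exact: (piece_S hk hkn hE hA).
have hT A : A \in Is k.-1 -> pT A (lT A).
  by move=> hA; apply: epsilon_spec; exact: (piece_T hk hkn hE hA).
have := @decomp n k lS lT hk hkn.
have e : [seq size (lS A) * size (lT A) | A <- Is k.-1] =
         [seq d (size A) (size A) * d (n - size A) (k - size A) | A <- Is k.-1].
  by apply/eq_in_map => A hA; have [_ _ ->] := hS A hA; have [_ _ ->] := hT A hA.
rewrite e; apply.
  by move=> A hA; have [? ? _] := hS A hA.
by move=> A hA; have [? ? _] := hT A hA.
Qed.

Lemma E n : forall j, 0 < j <= n -> exists m, counts (Q n j) m.
Proof.
elim/ltn_ind: n => n IH j hj.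
case: n IH hj => [|[|n]] IH hj; first by case/andP: hj => h1 h2; have := leq_trans h1 h2.
  have -> : j = 1 by apply/eqP; rewrite eqn_leq; case/andP: hj => -> ->.
  exists 1; apply/countsE; exists [:: PNode 1 [::]]; split=> // t; rewrite inE.
  split; first move=> /eqP ->.
    split; last by [].
    apply/dpt_onE; split=> //= x; by rewrite !inE.
  by case=> /dpt1 ->.
case: (ltnP j n.+2) => hjn.
  have hk : 2 <= j.+1 by case/andP: hj.
  have := decomp_d hk hjn IH; move=> h; eexists; exact: h.
have ejn : j = n.+2 by case/andP: hj => h1 h2; lia.
have := decomp_d (isT : 2 <= n.+2) (leqnn _) IH => h; eexists.
apply: (counts_ext _ h) => t; rewrite ejn; split; case=> h1 h2; split=> //.
  by apply: leq_trans h2 _; apply: leq_pred.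
exact: root_internal h1 isT.
Qed.
Theorem lemma11p2 (n k : nat) (hk : 2 <= k) (hkn : k <= n) :
  d n k.-1 = \sum_(1 <= a < k) 'C(k.-1, a) * d a a * d (n - a) (k - a).
Proof.
have hc := decomp_d hk hkn (fun n' _ => @E n').
have hk1 : 0 < k.-1 <= n by apply/andP; split; lia.
rewrite (dE hk1 hc).
pose F a := d a a * d (n - a) (k - a).
have -> : [seq d (size A) (size A) * d (n - size A) (k - size A) | A <- Is k.-1] =
          [seq F (size A) | A <- subs k.-1 & A != [::]] by [].
rewrite sumn_filter0; last by move=> A; rewrite negbK => /eqP ->.
rewrite sumn_subs prednK; last by lia.
rewrite big_ltn; last by lia.
rewrite /F; have -> : d 0 0 = 0 by [].
rewrite mul0n muln0 add0n; apply: eq_bigr => a _; by rewrite mulnA.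
Qed.
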